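(* Consider one round $t+1$ of the $(6,3)$-majority algorithm, with a fixed set of defined nodes at the end of round $t$ and a fixed set of blocked nodes in round $t+1$. Compare two assignments of values in $\{0,1\}$ to these defined nodes, with signed imbalances $\Delta_t$ and $\Delta'_t$ satisfying $\Delta_t\ge\Delta'_t\ge 0$. Then the resulting imbalance after round $t+1$ in the first case stochastically dominates that in the second case: $\Delta_{t+1}\succeq\Delta'_{t+1}$.
   Context: $(k,\ell)$-majority algorithm on $n$ fully interconnected nodes in synchronous rounds: each node $u$ has $x_u\in\{0,1,\bot\}$, and $u$ is defined iff $x_u\neq\bot$. In each round: if $u$ received fewer than $\ell$ values from the previous round or is blocked, it sets $x_u:=\bot$ and skips the rest of the round; otherwise it picks $\ell$ of the received values uniformly at random, sets $x_u$ to their majority, and sends $x_u$ to $k$ nodes chosen independently and uniformly at random. Blocked nodes neither send nor receive messages in that round. Notation: $X_t,Y_t$ are the numbers of nodes with value $0$, resp. $1$, at the end of round $t$, and the signed imbalance is $\Delta_t=(Y_t-X_t)/2$. A random variable $Z$ stochastically dominates $Z'$, written $Z\succeq Z'$, if $\Pr[Z\ge x]\ge\Pr[Z'\ge x]$ for all $x$. *)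

(* Defs.v *)
From HB Require Import structures.
From mathcomp Require Import all_boot all_order all_algebra.
Set Implicit Arguments. Unset Strict Implicit. Unset Printing Implicit Defensive.
Import Order.TTheory GRing.Theory Num.Theory.
Local Open Scope ring_scope.

Section OneRound.
Variables (R : realFieldType) (k l n : nat).

(* A message is identified by (sender, slot), slot < k. *)
Definition msg := ('I_n * 'I_k)%type.

(* Random destinations: each (sender, slot) is sent to a uniformly random node,
   independently. Only messages whose sender is defined (in D) exist. *)
Definition recv (D : {set 'I_n}) (dest : {ffun msg -> 'I_n}) (v : 'I_n)
  : {set msg} := [set m | (m.1 \in D) && (dest m == v)].

Definition active (D B : {set 'I_n}) (dest : {ffun msg -> 'I_n}) (v : 'I_n)
  : bool := (v \notin B) && (l <= #|recv D dest v|)%N.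

Definition node_weight (D B : {set 'I_n}) (dest : {ffun msg -> 'I_n})
  (v : 'I_n) (S : {set msg}) : R :=
  if active D B dest v then
    (if (S \subset recv D dest v) && (#|S| == l) then
       ('C(#|recv D dest v|, l)%:R)^-1 else 0)
  else (if S == set0 then 1 else 0).

(* new value of node v: None = bottom; otherwise the majority of the
   values carried by the sampled messages. *)
Definition new_val (a : 'I_n -> bool) (D B : {set 'I_n})
  (dest : {ffun msg -> 'I_n}) (sel : {ffun 'I_n -> {set msg}}) (v : 'I_n)
  : option bool :=
  if active D B dest v then
    Some (l < 2 * #|[set m in sel v | a m.1]|)%N
  else None.

Definition imbalance0 (a : 'I_n -> bool) (D : {set 'I_n}) : R :=
  ((#|[set u in D | a u]|%:R - #|[set u in D | ~~ a u]|%:R) / 2%:R).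

Definition imbalance1 (a : 'I_n -> bool) (D B : {set 'I_n})
  (dest : {ffun msg -> 'I_n}) (sel : {ffun 'I_n -> {set msg}}) : R :=
  ((#|[set v | new_val a D B dest sel v == Some true]|%:R
    - #|[set v | new_val a D B dest sel v == Some false]|%:R) / 2%:R).

(* Pr[ Delta_{t+1} >= x ] *)
Definition prob_imb_ge (a : 'I_n -> bool) (D B : {set 'I_n}) (x : R) : R :=
  \sum_(dest : {ffun msg -> 'I_n}) \sum_(sel : {ffun 'I_n -> {set msg}})
    (#|{: {ffun msg -> 'I_n}}|%:R)^-1
    * (\prod_(v : 'I_n) node_weight D B dest v (sel v))
    * (if x <= imbalance1 a D B dest sel then 1 else 0).

End OneRound.

(* Main.v *)
Require Import Defs.
From HB Require Import structures.
From mathcomp Require Import all_boot all_order all_algebra fingroup perm zify.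
Set Implicit Arguments. Unset Strict Implicit. Unset Printing Implicit Defensive.
Import Order.TTheory GRing.Theory Num.Theory.
Local Open Scope ring_scope.

Section Aux.
Variables (R : realFieldType) (k l n : nat).

Lemma node_weight_ge0 (D B : {set 'I_n}) (dest : {ffun msg k n -> 'I_n}) v S :
  0 <= node_weight R l D B dest v S.
Proof.
rewrite /node_weight; case: ifP => _; case: ifP => _ //.
by rewrite invr_ge0 ler0n.
Qed.

Lemma imb1_mono (a a' : 'I_n -> bool) (D B : {set 'I_n}) (dest : {ffun msg k n -> 'I_n})
  (sel : {ffun 'I_n -> {set msg k n}}) :
  (forall u, u \in D -> a' u -> a u) ->
  (forall v, active l D B dest v -> sel v \subset recv D dest v) ->
  imbalance1 R l a' D B dest sel <= imbalance1 R l a D B dest sel.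
Proof.
move=> Ha Hs.
have Hc : forall v, active l D B dest v ->
  (#|[set m in sel v | a' m.1]| <= #|[set m in sel v | a m.1]|)%N.
  move=> v /Hs /subsetP Hsub; apply: subset_leq_card; apply/subsetP => m.
  rewrite !inE => /andP [Hm Ham]; rewrite Hm /=.
  have := Hsub m Hm; rewrite inE => /andP [HD _]; exact: Ha.
rewrite /imbalance1 ler_pM2r ?invr_gt0 ?ltr0n //.
apply: lerB; rewrite ler_nat; apply: subset_leq_card; apply/subsetP => v;
  rewrite !inE /new_val; case Hv: (active l D B dest v) => //.
- move/eqP => [] H; apply/eqP; congr Some.
  by apply: leq_trans H _; rewrite leq_mul2l Hc ?orbT.
- move/eqP => [] H; apply/eqP; congr Some; apply/negbTE; move/negbT: H.
  rewrite -!leqNgt => H; apply: leq_trans _ H; by rewrite leq_mul2l Hc ?orbT.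
Qed.

Lemma prob_mono (a a' : 'I_n -> bool) (D B : {set 'I_n}) x :
  (forall u, u \in D -> a' u -> a u) ->
  @prob_imb_ge R k l n a' D B x <= @prob_imb_ge R k l n a D B x.
Proof.
move=> Ha; apply: ler_sum => dest _; apply: ler_sum => sel _.
have W0 : 0 <= (#|{: {ffun msg k n -> 'I_n}}|%:R : R)^-1 *
   \prod_v node_weight R l D B dest v (sel v).
  by rewrite mulr_ge0 ?invr_ge0 ?ler0n // prodr_ge0 // => v _; apply: node_weight_ge0.
case: (boolP ((\prod_v node_weight R l D B dest v (sel v)) == 0)) => [/eqP ->|Hn].
  by rewrite !mulr0 !mul0r.
apply: ler_wpM2l => //.
have Hs : forall v, active l D B dest v -> sel v \subset recv D dest v.
  move=> v Hv; move/prodf_neq0: Hn => /(_ v isT).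
  rewrite /node_weight Hv; case: ifP => [/andP[] //|_]; by rewrite eqxx.
have := imb1_mono Ha Hs.
case: ifP => H1; case: ifP => H2 //.
by move=> H3; rewrite (le_trans H1 H3) in H2.
Qed.

End Aux.
Section Perm.
Variables (R : realFieldType) (k l n : nat).
Variables (s : {perm 'I_n}) (D B : {set 'I_n}).
Hypothesis sD : forall u, (s u \in D) = (u \in D).

Definition tm (m : msg k n) : msg k n := (s m.1, m.2).
Definition tmi (m : msg k n) : msg k n := ((s^-1)%g m.1, m.2).
Lemma tmK : cancel tm tmi. Proof. by case=> u j; rewrite /tm /tmi /= permK. Qed.
Lemma tmiK : cancel tmi tm. Proof. by case=> u j; rewrite /tm /tmi /= permKV. Qed.
Lemma tm_inj : injective tm. Proof. exact: can_inj tmK. Qed.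

Lemma preimK (A : {set msg k n}) : tmi @^-1: (tm @^-1: A) = A.
Proof. by apply/setP => m; rewrite !inE tmiK. Qed.

Lemma preim_sub (A A' : {set msg k n}) :
  (tm @^-1: A \subset tm @^-1: A') = (A \subset A').
Proof.
apply/idP/idP => H; last exact: preimsetS.
by have := preimsetS tmi H; rewrite !preimK.
Qed.

Definition hd (dest : {ffun msg k n -> 'I_n}) : {ffun msg k n -> 'I_n} :=
  [ffun m => dest (tm m)].
Definition hs (sel : {ffun 'I_n -> {set msg k n}}) : {ffun 'I_n -> {set msg k n}} :=
  [ffun v => tm @^-1: sel v].

Lemma hd_inj : injective hd.
Proof.
move=> d1 d2 H; apply/ffunP => m.
have := congr1 (fun d : {ffun msg k n -> 'I_n} => d (tmi m)) H.
by rewrite /hd !ffunE tmiK.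
Qed.

Lemma hs_inj : injective hs.
Proof.
move=> d1 d2 H; apply/ffunP => v.
have := congr1 (fun d : {ffun 'I_n -> {set msg k n}} => tmi @^-1: d v) H.
by rewrite /hs !ffunE !preimK.
Qed.

Lemma recv_t dest v : recv D (hd dest) v = tm @^-1: recv D dest v.
Proof. by apply/setP => m; rewrite !inE ffunE /tm /= sD. Qed.

Lemma active_t dest v : active l D B (hd dest) v = active l D B dest v.
Proof. by rewrite /active recv_t card_preimset //; exact: tm_inj. Qed.

Lemma nw_t dest v (S : {set msg k n}) :
  node_weight R l D B (hd dest) v (tm @^-1: S) = node_weight R l D B dest v S.
Proof.
rewrite /node_weight active_t recv_t preim_sub !card_preimset //; try exact: tm_inj.
by rewrite -!cards_eq0 card_preimset //; exact: tm_inj.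
Qed.

Lemma nv_t (a : 'I_n -> bool) dest sel v :
  new_val l (fun u => a (s u)) D B (hd dest) (hs sel) v = new_val l a D B dest sel v.
Proof.
rewrite /new_val active_t; case: ifP => // _.
have -> : [set m in hs sel v | a (s m.1)] = tm @^-1: [set m in sel v | a m.1].
  by apply/setP => m; rewrite /hs !inE ffunE inE.
by rewrite card_preimset //; exact: tm_inj.
Qed.

Lemma prob_perm (a : 'I_n -> bool) x :
  @prob_imb_ge R k l n (fun u => a (s u)) D B x = @prob_imb_ge R k l n a D B x.
Proof.
rewrite /prob_imb_ge (reindex_inj hd_inj); apply: eq_bigr => dest _.
rewrite (reindex_inj hs_inj); apply: eq_bigr => sel _.
congr (_ * _ * _).
  by apply: eq_bigr => v _; rewrite ffunE nw_t.
have -> : imbalance1 R l (fun u => a (s u)) D B (hd dest) (hs sel)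
        = imbalance1 R l a D B dest sel.
  by rewrite /imbalance1; congr ((_%:R - _%:R) / _); apply: eq_card => v;
     rewrite !inE nv_t.
by [].
Qed.

End Perm.

Section Main.
Variables (R : realFieldType) (k l n : nat).

Lemma card_split (a : 'I_n -> bool) (D : {set 'I_n}) :
  (#|[set u in D | a u]| + #|[set u in D | ~~ a u]|)%N = #|D|.
Proof.
rewrite -(cardsID [set u | a u] D).
have -> : [set u in D | a u] = D :&: [set u | a u].
  by apply/setP => u; rewrite !inE.
have -> : [set u in D | ~~ a u] = D :\: [set u | a u].
  by apply/setP => u; rewrite !inE andbC.
by [].
Qed.

Lemma prob_count (a : 'I_n -> bool) (D B : {set 'I_n}) x N :
  forall a' : 'I_n -> bool,
  (#|[set u in D | a' u && ~~ a u]| <= N)%N ->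
  (#|[set u in D | a' u]| <= #|[set u in D | a u]|)%N ->
  @prob_imb_ge R k l n a' D B x <= @prob_imb_ge R k l n a D B x.
Proof.
elim: N => [|N IH] a' HN Hc.
  apply: prob_mono => u uD a'u; apply/negPn/negP => na.
  have : u \in [set u in D | a' u && ~~ a u] by rewrite inE uD a'u na.
  by move: HN; rewrite leqn0 cards_eq0 => /eqP ->; rewrite inE.
case: (leqP #|[set u in D | a' u && ~~ a u]| N) => HN'; first exact: IH.
have : (0 < #|[set u in D | a' u && ~~ a u]|)%N by apply: leq_ltn_trans HN'.
case/card_gt0P => u; rewrite inE => /and3P [uD a'u nau].
have [w wD /andP [aw na'w]] : exists2 w, w \in D & a w && ~~ a' w.
  case: (boolP [exists w in D, a w && ~~ a' w]) => [/exists_inP //|/exists_inPn Hno].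
  have Hsub : [set u in D | a u] \subset [set u in D | a' u].
    apply/subsetP => y; rewrite !inE => /andP [yD ay]; rewrite yD /=.
    by have := Hno y yD; rewrite ay /= negbK.
  have Heq : [set u in D | a u] = [set u in D | a' u].
    by apply/eqP; rewrite eqEcard Hsub Hc.
  have : u \in [set u in D | a' u] by rewrite inE uD a'u.
  by rewrite -Heq inE (negbTE nau) andbF.
set s := tperm u w.
have sD : forall y, (s y \in D) = (y \in D).
  by move=> y; rewrite /s; case: tpermP => [->|->|] //; rewrite ?uD ?wD.
rewrite -(@prob_perm R k l n s D B sD a' x).
apply: IH.
  rewrite -ltnS; apply: leq_trans HN.
  apply: (leq_ltn_trans (n := #|[set u in D | a' u && ~~ a u] :\ u|)).
    apply: subset_leq_card; apply/subsetP => y; rewrite !inE /s.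
    case: tpermP => [->|->|/eqP yu /eqP yw] /andP[yD /andP[H1 H2]].
    - by rewrite (negbTE na'w) in H1.
    - by rewrite aw in H2.
    - by rewrite yu yD H1 H2.
  by apply: proper_card; apply: properD1; rewrite inE uD a'u nau.
have -> : [set y in D | a' (s y)] = s @^-1: [set y in D | a' y].
  by apply/setP => y; rewrite !inE sD.
by rewrite card_preimset //; exact: perm_inj.
Qed.

End Main.

From mathcomp Require Import lra.

Theorem lemma5 (R : realFieldType) (n : nat) (D B : {set 'I_n})
  (a a' : 'I_n -> bool) :
  imbalance0 R a' D <= imbalance0 R a D ->
  0 <= imbalance0 R a' D ->
  forall x : R,
    @prob_imb_ge R 6 3 n a' D B x <= @prob_imb_ge R 6 3 n a D B x.
Proof.
move=> H _ x.
apply: (@prob_count R 6 3 n a D B x #|D|).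
  by apply: subset_leq_card; apply/subsetP => u; rewrite inE => /andP[].
move: H; rewrite /imbalance0 ler_pM2r ?invr_gt0 ?ltr0n //.
have E1 := card_split a D; have E2 := card_split a' D.
move/(congr1 (fun m : nat => m%:R : R)): E1; rewrite natrD => E1.
move/(congr1 (fun m : nat => m%:R : R)): E2; rewrite natrD => E2.
move=> H; rewrite -(ler_nat R); lra.
Qed.
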